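(* Let $B^{H,K}$ be a bifractional Brownian motion with $0<H\le1/2$, $0<K\le1$ and $2HK=1/2$. Then for every $T>0$, $W=B^{H,K}$ satisfies conditions (i)–(iv) below on $[0,T]$ (with constants depending on $T$).
   Context: The bifractional Brownian motion $B^{H,K}=\{B^{H,K}_t,t\ge0\}$, $H\in(0,1)$, $K\in(0,1]$, is the centered Gaussian process with $\mathbb E[B^{H,K}_tB^{H,K}_s]=2^{-K}\big[(t^{2H}+s^{2H})^K-|t-s|^{2HK}\big]$. Conditions for a centered Gaussian process $W$ on $[0,T]$: (i) $\mathbb E[(W_t-W_{t-s})^2]\le C_1 s^{1/2}$ for $0<s\le t\le T$. (ii) There are $1<\alpha\le3/2$, $\beta=\frac32-\alpha$ such that for $s>0$, $2s\le r,t\le T$, $|t-r|\ge2s$: $|\mathbb E[(W_t-W_{t-s})(W_r-W_{r-s})]|\le C_1s^2|t-r|^{-\alpha}(t\wedge r-s)^{-\beta}+C_1s^2|t-r|^{-3/2}$. (iii) For $0<t\le T$, $0<s\le r\le T$: $|\mathbb E[W_t(W_{r+s}-2W_r+W_{r-s})]|\le C_2s^{1/2}$ if $r<2s$ or $|t-r|<2s$, and $\le C_2s^2((r-s)^{-3/2}+|t-r|^{-3/2})$ if $r\ge2s$ and $|t-r|\ge2s$. (iv) For $0<s\le t\le T-s$: $|\mathbb E[W_t(W_{t+s}-W_{t-s})]|\le C_3s^{1/2}$ if $t<2s$ and $\le C_3s(t-s)^{-1/2}$ if $t\ge2s$; for $0<s\le r\le T$: $|\mathbb E[W_r(W_{t+s}-W_{t-s})]|\le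 C_3s^{1/2}$ if $t<2s$ or $|t-r|<2s$, and $\le C_3s(t-s)^{-1/2}+C_3s|t-r|^{-1/2}$ if $t\ge2s$ and $|t-r|\ge2s$; and for $t>2s$: $|\mathbb E[W_s(W_t-W_{t-s})]|\le C_3s^{1/2+\gamma}(t-2s)^{-\gamma}$ for some $\gamma>0$. *)

(* Defs.v *)
From Stdlib Require Import Reals Lra.
Open Scope R_scope.

(* Real power x^a for x >= 0, with the convention 0^a = 0 (only used with
   x >= 0; with a > 0 this is the usual power; Stdlib's Rpower 0 a = 1
   would be wrong, hence the guard). *)
Definition rpow (x a : R) : R := if Rle_dec x 0 then 0 else Rpower x a.

Definition bfbm_cov (H K : R) (t s : R) : R :=
  Rpower 2 (- K) *
  (rpow (rpow t (2 * H) + rpow s (2 * H)) K - rpow (Rabs (t - s)) (2 * H * K)).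

(* Second moments of increments of a centered process W with covariance
   Rc(t,s) = E[W_t W_s], expanded by bilinearity of expectation. *)

(* E[(W_t - W_{t-s})(W_r - W_{r-s})] *)
Definition incr_cov (Rc : R -> R -> R) (s t r : R) : R :=
  Rc t r - Rc t (r - s) - Rc (t - s) r + Rc (t - s) (r - s).

(* E[W_t (W_{r+s} - 2 W_r + W_{r-s})] *)
Definition second_diff_cov (Rc : R -> R -> R) (s t r : R) : R :=
  Rc t (r + s) - 2 * Rc t r + Rc t (r - s).

(* E[W_u (W_{t+s} - W_{t-s})] *)
Definition sym_diff_cov (Rc : R -> R -> R) (s u t : R) : R :=
  Rc u (t + s) - Rc u (t - s).

(* E[W_u (W_t - W_{t-s})] *)
Definition back_diff_cov (Rc : R -> R -> R) (s u t : R) : R :=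
  Rc u t - Rc u (t - s).

Definition cond_i (T : R) (Rc : R -> R -> R) : Prop :=
  exists C1 : R, forall s t : R, 0 < s -> s <= t -> t <= T ->
    incr_cov Rc s t t <= C1 * rpow s (1/2).

Definition cond_ii (T : R) (Rc : R -> R -> R) : Prop :=
  exists C1 alpha : R, 1 < alpha /\ alpha <= 3/2 /\
    let beta := 3/2 - alpha in
    forall s t r : R, 0 < s -> 2 * s <= r -> r <= T -> 2 * s <= t -> t <= T ->
      2 * s <= Rabs (t - r) ->
      Rabs (incr_cov Rc s t r) <=
        C1 * s ^ 2 * rpow (Rabs (t - r)) (- alpha) * rpow (Rmin t r - s) (- beta)
        + C1 * s ^ 2 * rpow (Rabs (t - r)) (- (3/2)).

Definition cond_iii (T : R) (Rc : R -> R -> R) : Prop :=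
  exists C2 : R, forall t s r : R, 0 < t -> t <= T -> 0 < s -> s <= r -> r <= T ->
    ((r < 2 * s \/ Rabs (t - r) < 2 * s) ->
       Rabs (second_diff_cov Rc s t r) <= C2 * rpow s (1/2)) /\
    ((2 * s <= r /\ 2 * s <= Rabs (t - r)) ->
       Rabs (second_diff_cov Rc s t r) <=
         C2 * s ^ 2 * (rpow (r - s) (- (3/2)) + rpow (Rabs (t - r)) (- (3/2)))).

Definition cond_iv (T : R) (Rc : R -> R -> R) : Prop :=
  exists C3 gamma : R, 0 < gamma /\
    (forall s t : R, 0 < s -> s <= t -> t <= T - s ->
       (t < 2 * s -> Rabs (sym_diff_cov Rc s t t) <= C3 * rpow s (1/2)) /\
       (2 * s <= t -> Rabs (sym_diff_cov Rc s t t) <= C3 * s * rpow (t - s) (- (1/2)))) /\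
    (forall s r t : R, 0 < s -> s <= r -> r <= T -> s <= t -> t <= T ->
       ((t < 2 * s \/ Rabs (t - r) < 2 * s) ->
          Rabs (sym_diff_cov Rc s r t) <= C3 * rpow s (1/2)) /\
       ((2 * s <= t /\ 2 * s <= Rabs (t - r)) ->
          Rabs (sym_diff_cov Rc s r t) <=
            C3 * s * rpow (t - s) (- (1/2)) + C3 * s * rpow (Rabs (t - r)) (- (1/2)))) /\
    (forall s t : R, 0 < s -> 2 * s < t -> t <= T ->
       Rabs (back_diff_cov Rc s s t) <= C3 * rpow s (1/2 + gamma) * rpow (t - 2 * s) (- gamma)).

(* Main.v *)
Require Import Defs.
From Stdlib Require Import Reals Lra Psatz.
Open Scope R_scope.

Lemma Rpower_pos x y : 0 < Rpower x y.
Proof. unfold Rpower; apply exp_pos. Qed.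

Lemma rpow_pos_eq x a : 0 < x -> rpow x a = Rpower x a.
Proof. intros; unfold rpow; destruct (Rle_dec x 0); lra. Qed.

Lemma rpow_nonpos x a : x <= 0 -> rpow x a = 0.
Proof. intros; unfold rpow; destruct (Rle_dec x 0); lra. Qed.

Lemma rpow_nonneg x a : 0 <= rpow x a.
Proof. unfold rpow; destruct (Rle_dec x 0); [lra|left; apply Rpower_pos]. Qed.

Lemma exp_mono x y : x <= y -> exp x <= exp y.
Proof. intros [H|H]; [left; apply exp_increasing; auto| subst; lra]. Qed.

Lemma ln_mono a b : 0 < a -> a <= b -> ln a <= ln b.
Proof. intros Ha [H|H]; [left; apply ln_increasing; auto| subst; lra]. Qed.

Lemma Rpower_le_neg a b e : e <= 0 -> 0 < a <= b -> Rpower b e <= Rpower a e.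
Proof.
  intros He [Ha Hab]; unfold Rpower; apply exp_mono.
  pose proof (ln_mono a b Ha Hab); nra.
Qed.

Lemma rpow_le_pos c a b : 0 <= c -> 0 <= a <= b -> rpow a c <= rpow b c.
Proof.
  intros Hc [Ha Hab]. destruct (Rle_dec a 0).
  - rewrite (rpow_nonpos a); auto; apply rpow_nonneg.
  - rewrite !rpow_pos_eq by lra. apply Rle_Rpower_l; lra.
Qed.

Lemma z_le_Rpower z q : 0 < z <= 1 -> q <= 1 -> z <= Rpower z q.
Proof.
  intros [Hz Hz1] Hq. rewrite <- (Rpower_1 z) at 1 by lra. unfold Rpower.
  apply exp_mono. pose proof (ln_mono z 1 Hz Hz1). rewrite ln_1 in H. nra.
Qed.

Lemma subadd q a b : 0 < q <= 1 -> 0 <= a -> 0 <= b ->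
  rpow (a + b) q <= rpow a q + rpow b q.
Proof.
  intros Hq Ha Hb.
  destruct (Rle_dec a 0). { assert (a = 0) by lra; subst.
    rewrite (rpow_nonpos 0) by lra. rewrite Rplus_0_l; lra. }
  destruct (Rle_dec b 0). { assert (b = 0) by lra; subst.
    rewrite (rpow_nonpos 0) by lra. rewrite Rplus_0_r; lra. }
  rewrite !rpow_pos_eq by lra.
  set (z := a / (a + b)). set (w := b / (a + b)).
  assert (Hz : 0 < z <= 1). { unfold z; split. apply Rdiv_lt_0_compat; lra.
    apply Rmult_le_reg_r with (a+b); [lra|]. unfold Rdiv; rewrite Rmult_assoc, Rinv_l; lra. }
  assert (Hw : 0 < w <= 1). { unfold w; split. apply Rdiv_lt_0_compat; lra.
    apply Rmult_le_reg_r with (a+b); [lra|]. unfold Rdiv; rewrite Rmult_assoc, Rinv_l; lra. }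
  assert (Hzw : z + w = 1) by (unfold z, w; field; lra).
  replace (Rpower a q) with (Rpower z q * Rpower (a+b) q).
  2:{ rewrite Rpower_mult_distr by lra. f_equal. unfold z; field; lra. }
  replace (Rpower b q) with (Rpower w q * Rpower (a+b) q).
  2:{ rewrite Rpower_mult_distr by lra. f_equal. unfold w; field; lra. }
  pose proof (z_le_Rpower z q Hz ltac:(lra)).
  pose proof (z_le_Rpower w q Hw ltac:(lra)).
  pose proof (Rpower_pos (a+b) q). nra.
Qed.

Lemma rpow_diff q a b : 0 < q <= 1 -> 0 <= b <= a -> rpow a q - rpow b q <= rpow (a - b) q.
Proof.
  intros Hq Hb. pose proof (subadd q b (a - b) Hq ltac:(lra) ltac:(lra)).
  replace (b + (a - b)) with a in H by ring. lra.
Qed.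

Lemma rpow_absdiff q a b : 0 < q <= 1 -> 0 <= a -> 0 <= b ->
  Rabs (rpow a q - rpow b q) <= rpow (Rabs (a - b)) q.
Proof.
  intros Hq Ha Hb. destruct (Rle_dec b a).
  - pose proof (rpow_diff q a b Hq ltac:(lra)).
    pose proof (rpow_le_pos q b a ltac:(lra) ltac:(lra)).
    rewrite Rabs_right by lra. rewrite Rabs_right by lra. lra.
  - pose proof (rpow_diff q b a Hq ltac:(lra)).
    pose proof (rpow_le_pos q a b ltac:(lra) ltac:(lra)).
    rewrite Rabs_left1 by lra. rewrite Rabs_left1 by lra.
    replace (- (a - b)) with (b - a) by ring. lra.
Qed.

Lemma rpow_rpow z p K : 0 <= z -> rpow (rpow z p) K = rpow z (p * K).
Proof.
  intros Hz. destruct (Rle_dec z 0).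
  - rewrite (rpow_nonpos z p), (rpow_nonpos z), rpow_nonpos; lra.
  - rewrite (rpow_pos_eq z p) by lra. rewrite rpow_pos_eq by apply Rpower_pos.
    rewrite rpow_pos_eq by lra. apply Rpower_mult.
Qed.

Definition Gf p K x y := rpow (rpow x p + rpow y p) K.
Definition Df x y := rpow (Rabs (x - y)) (1/2).

Lemma cov_eq H K x y : 2 * H * K = 1/2 ->
  bfbm_cov H K x y = Rpower 2 (- K) * (Gf (2*H) K x y - Df x y).
Proof. intros E; unfold bfbm_cov, Gf, Df; rewrite E; reflexivity. Qed.

Lemma c_bounds K : 0 < K -> 0 < Rpower 2 (-K) <= 1.
Proof.
  intros; split; [apply Rpower_pos|].
  rewrite <- (Rpower_O 2) by lra. apply Rle_Rpower; lra.
Qed.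

Lemma Glip p K x a b : 0 < p <= 1 -> 0 < K <= 1 -> p * K = 1/2 ->
  0 <= x -> 0 <= b <= a ->
  0 <= Gf p K x a - Gf p K x b <= rpow (a - b) (1/2).
Proof.
  intros Hp HK E Hx Hb. unfold Gf.
  pose proof (rpow_nonneg x p). pose proof (rpow_nonneg b p).
  pose proof (rpow_le_pos p b a ltac:(lra) ltac:(lra)).
  pose proof (rpow_diff p a b Hp Hb).
  split.
  - pose proof (rpow_le_pos K (rpow x p + rpow b p) (rpow x p + rpow a p) ltac:(lra) ltac:(lra)). lra.
  - replace (rpow x p + rpow a p) with ((rpow x p + rpow b p) + (rpow a p - rpow b p)) by ring.
    pose proof (subadd K (rpow x p + rpow b p) (rpow a p - rpow b p) HK ltac:(lra) ltac:(lra)).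
    pose proof (rpow_le_pos K (rpow a p - rpow b p) (rpow (a - b) p) ltac:(lra) ltac:(lra)).
    rewrite rpow_rpow in H4 by lra. rewrite E in H4. lra.
Qed.

Lemma Dlip x a b : 0 <= b <= a -> Rabs (Df x a - Df x b) <= rpow (a - b) (1/2).
Proof.
  intros Hb. unfold Df.
  eapply Rle_trans. apply rpow_absdiff; try lra; apply Rabs_pos.
  apply rpow_le_pos; [lra|]. split; [apply Rabs_pos|].
  unfold Rabs; repeat destruct Rcase_abs; lra.
Qed.

Lemma abs_sub_le a b : Rabs (a - b) <= Rabs a + Rabs b.
Proof. unfold Rabs; repeat destruct Rcase_abs; lra. Qed.

Lemma abs_add_le a b : Rabs (a + b) <= Rabs a + Rabs b.
Proof. unfold Rabs; repeat destruct Rcase_abs; lra. Qed.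

Lemma Rlip H K x a b : 0 < H <= 1/2 -> 0 < K <= 1 -> 2 * H * K = 1/2 ->
  0 <= x -> 0 <= b <= a ->
  Rabs (bfbm_cov H K x a - bfbm_cov H K x b) <= 2 * rpow (a - b) (1/2).
Proof.
  intros HH HK E Hx Hb. rewrite !cov_eq by auto.
  pose proof (c_bounds K ltac:(lra)).
  pose proof (Glip (2*H) K x a b ltac:(lra) HK ltac:(lra) Hx Hb).
  pose proof (Dlip x a b Hb).
  set (c := Rpower 2 (-K)) in *.
  replace (c * (Gf (2 * H) K x a - Df x a) - c * (Gf (2 * H) K x b - Df x b))
    with (c * ((Gf (2 * H) K x a - Gf (2*H) K x b) - (Df x a - Df x b))) by ring.
  rewrite Rabs_mult, (Rabs_right c) by lra.
  pose proof (abs_sub_le (Gf (2 * H) K x a - Gf (2*H) K x b) (Df x a - Df x b)).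
  rewrite (Rabs_right (Gf (2 * H) K x a - Gf (2*H) K x b)) in H3 by lra.
  pose proof (Rabs_pos ((Gf (2 * H) K x a - Gf (2 * H) K x b) - (Df x a - Df x b))).
  pose proof (rpow_nonneg (a - b) (1/2)). nra.
Qed.

Lemma mvt_bound f f' a b M : a <= b ->
  (forall c, a <= c <= b -> derivable_pt_lim f c (f' c)) ->
  (forall c, a <= c <= b -> Rabs (f' c) <= M) ->
  Rabs (f b - f a) <= M * (b - a).
Proof.
  intros Hab Hd HM. destruct (Req_dec a b) as [E|E].
  - subst. replace (f b - f b) with 0 by ring. rewrite Rabs_R0.
    specialize (HM b ltac:(lra)). pose proof (Rabs_pos (f' b)). nra.
  - destruct (MVT_cor2 f f' a b ltac:(lra) Hd) as [c [Hc Hc2]].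
    rewrite Hc, Rabs_mult, (Rabs_right (b - a)) by lra.
    apply Rmult_le_compat_r; [lra|]. apply HM; lra.
Qed.

Lemma dpl_shift h a x l : derivable_pt_lim h (a + x) l ->
  derivable_pt_lim (fun y => h (a + y)) x l.
Proof.
  intros Hd.
  assert (H1 : derivable_pt_lim (fun y => a + y) x 1).
  { apply (derivable_pt_lim_ext (fct_cte a + id)%F).
    - intros; reflexivity.
    - replace 1 with (0 + 1) by ring. apply derivable_pt_lim_plus.
      apply derivable_pt_lim_const. apply derivable_pt_lim_id. }
  replace l with (l * 1) by ring.
  apply (derivable_pt_lim_ext (comp h (fun y => a + y))).
  - intros; reflexivity.
  - apply derivable_pt_lim_comp; auto.
Qed.

Lemma dpl_refl h a x l : derivable_pt_lim h (a - x) l ->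
  derivable_pt_lim (fun y => h (a - y)) x (- l).
Proof.
  intros Hd.
  assert (H1 : derivable_pt_lim (fun y => a - y) x (-1)).
  { apply (derivable_pt_lim_ext (fct_cte a - id)%F).
    - intros; reflexivity.
    - replace (-1) with (0 - 1) by ring. apply derivable_pt_lim_minus.
      apply derivable_pt_lim_const. apply derivable_pt_lim_id. }
  replace (- l) with (l * -1) by ring.
  apply (derivable_pt_lim_ext (comp h (fun y => a - y))).
  - intros; reflexivity.
  - apply derivable_pt_lim_comp; auto.
Qed.

Lemma second_diff h h1 h2 a s M : 0 < s ->
  (forall x, a - s <= x <= a + s -> derivable_pt_lim h x (h1 x)) ->
  (forall x, a - s <= x <= a + s -> derivable_pt_lim h1 x (h2 x)) ->
  (forall x, a - s <= x <= a + s -> Rabs (h2 x) <= M) ->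
  Rabs (h (a + s) - 2 * h a + h (a - s)) <= 2 * M * s ^ 2.
Proof.
  intros Hs D1 D2 HM.
  assert (HM0 : 0 <= M) by (specialize (HM a ltac:(lra)); pose proof (Rabs_pos (h2 a)); lra).
  pose proof (mvt_bound (fun x => h (a + x) + h (a - x)) (fun x => h1 (a + x) - h1 (a - x))
     0 s (2 * M * s) ltac:(lra)) as Hm.
  replace (h (a + s) - 2 * h a + h (a - s)) with
     ((fun x => h (a + x) + h (a - x)) s - (fun x => h (a + x) + h (a - x)) 0)
     by (simpl; rewrite Rplus_0_r, Rminus_0_r; ring).
  replace (2 * M * s ^ 2) with (2 * M * s * (s - 0)) by ring.
  apply Hm.
  - intros c Hc. unfold Rminus at 2. apply derivable_pt_lim_plus.
    + apply dpl_shift. apply D1; lra.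
    + apply dpl_refl. apply D1; lra.
  - intros c Hc.
    pose proof (mvt_bound h1 h2 (a - c) (a + c) M ltac:(lra)
       ltac:(intros; apply D2; lra) ltac:(intros; apply HM; lra)).
    eapply Rle_trans; [apply H|]. nra.
Qed.

Lemma mixed_diff F F1 F12 t r s M : 0 < s ->
  (forall x y, t - s <= x <= t -> r - s <= y <= r ->
     derivable_pt_lim (fun x => F x y) x (F1 x y)) ->
  (forall x y, t - s <= x <= t -> r - s <= y <= r ->
     derivable_pt_lim (fun y => F1 x y) y (F12 x y)) ->
  (forall x y, t - s <= x <= t -> r - s <= y <= r -> Rabs (F12 x y) <= M) ->
  Rabs (F t r - F t (r - s) - F (t - s) r + F (t - s) (r - s)) <= M * s ^ 2.
Proof.
  intros Hs D1 D2 HM.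
  replace (F t r - F t (r - s) - F (t - s) r + F (t - s) (r - s)) with
    ((fun x => F x r - F x (r - s)) t - (fun x => F x r - F x (r - s)) (t - s)) by (simpl; ring).
  replace (M * s ^ 2) with ((M * s) * (t - (t - s))) by ring.
  apply (mvt_bound (fun x => F x r - F x (r - s)) (fun x => F1 x r - F1 x (r - s)) (t - s) t (M * s)); [lra| |].
  - intros c Hc. apply (derivable_pt_lim_ext (minus_fct (fun x => F x r) (fun x => F x (r - s))));
    [intros; reflexivity|]. apply derivable_pt_lim_minus; apply D1; lra.
  - intros c Hc. replace (r - (r - s)) with s by ring.
    replace (M * s) with (M * (r - (r - s))) by ring.
    apply (mvt_bound (fun y => F1 c y) (fun y => F12 c y) (r - s) r M); [lra| |].
    + intros; apply D2; lra.
    + intros; apply HM; lra.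
Qed.

Lemma d_pow_sum p e c u : 0 < u -> 0 <= c ->
  derivable_pt_lim (fun u => Rpower (Rpower u p + c) e) u
    (e * Rpower (Rpower u p + c) (e - 1) * (p * Rpower u (p - 1))).
Proof.
  intros Hu Hc.
  apply (derivable_pt_lim_ext (comp (fun z => Rpower z e) (fun u => Rpower u p + c)));
    [intros; reflexivity|].
  replace (e * Rpower (Rpower u p + c) (e - 1) * (p * Rpower u (p - 1))) with
    ((e * Rpower (Rpower u p + c) (e - 1)) * (p * Rpower u (p - 1) + 0)) by ring.
  apply derivable_pt_lim_comp.
  - apply (derivable_pt_lim_ext (plus_fct (fun u => Rpower u p) (fct_cte c)));
      [intros; reflexivity|].
    apply derivable_pt_lim_plus. apply derivable_pt_lim_power; auto.
    apply derivable_pt_lim_const.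
  - apply derivable_pt_lim_power. pose proof (Rpower_pos u p); lra.
Qed.

Lemma dpl_eq f x l l' : derivable_pt_lim f x l -> l = l' -> derivable_pt_lim f x l'.
Proof. intros; subst; auto. Qed.

Definition g1 p K c u := K * Rpower (Rpower u p + c) (K - 1) * (p * Rpower u (p - 1)).
Definition g2 p K c u :=
  K * ((K - 1) * Rpower (Rpower u p + c) (K - 1 - 1) * (p * Rpower u (p - 1))) * (p * Rpower u (p - 1))
  + K * Rpower (Rpower u p + c) (K - 1) * (p * ((p - 1) * Rpower u (p - 1 - 1))).

Lemma d_g0 p K c u : 0 < u -> 0 <= c ->
  derivable_pt_lim (fun u => Rpower (Rpower u p + c) K) u (g1 p K c u).
Proof. intros; apply d_pow_sum; auto. Qed.

Lemma d_g1 p K c u : 0 < u -> 0 <= c ->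
  derivable_pt_lim (fun u => g1 p K c u) u (g2 p K c u).
Proof.
  intros Hu Hc. unfold g1, g2.
  apply (derivable_pt_lim_ext (mult_fct (mult_real_fct K (fun u => Rpower (Rpower u p + c) (K - 1)))
            (mult_real_fct p (fun u => Rpower u (p - 1))))).
  { intros; unfold mult_fct, mult_real_fct; ring. }
  eapply dpl_eq. apply derivable_pt_lim_mult; apply derivable_pt_lim_scal.
  - apply d_pow_sum; auto.
  - apply derivable_pt_lim_power; auto.
  - unfold mult_real_fct; ring.
Qed.

Lemma Rpower_mul_same u a b : Rpower u a * Rpower u b = Rpower u (a + b).
Proof. rewrite Rpower_plus; reflexivity. Qed.

Lemma sum_bound p e c u : e <= 0 -> 0 < u -> 0 <= c ->
  Rpower (Rpower u p + c) e <= Rpower u (p * e).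
Proof.
  intros He Hu Hc. rewrite <- Rpower_mult. apply Rpower_le_neg; auto.
  pose proof (Rpower_pos u p); lra.
Qed.

Lemma Bg1 p K c u : 0 < p <= 1 -> 0 < K <= 1 -> p * K = 1/2 -> 0 < u -> 0 <= c ->
  Rabs (g1 p K c u) <= / 2 * Rpower u (- (1/2)).
Proof.
  intros Hp HK E Hu Hc. unfold g1.
  pose proof (sum_bound p (K - 1) c u ltac:(lra) Hu Hc).
  pose proof (Rpower_pos (Rpower u p + c) (K - 1)).
  pose proof (Rpower_pos u (p - 1)).
  rewrite Rabs_right.
  2:{ apply Rle_ge. apply Rmult_le_pos; [|nra]. nra. }
  replace (/ 2 * Rpower u (- (1/2))) with (K * Rpower u (p * (K - 1)) * (p * Rpower u (p - 1))).
  - apply Rmult_le_compat_r; [nra|]. apply Rmult_le_compat_l; lra.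
  - replace (K * Rpower u (p * (K - 1)) * (p * Rpower u (p - 1))) with
      ((p * K) * (Rpower u (p * (K - 1)) * Rpower u (p - 1))) by ring.
    rewrite Rpower_mul_same, E. replace (p * (K - 1) + (p - 1)) with (- (1/2)) by nra. field.
Qed.

Lemma Bg2 p K c u : 0 < p <= 1 -> 0 < K <= 1 -> p * K = 1/2 -> 0 < u -> 0 <= c ->
  Rabs (g2 p K c u) <= 2 * Rpower u (- (3/2)).
Proof.
  intros Hp HK E Hu Hc. unfold g2.
  set (A := Rpower u p + c).
  pose proof (sum_bound p (K - 1 - 1) c u ltac:(lra) Hu Hc).
  pose proof (sum_bound p (K - 1) c u ltac:(lra) Hu Hc).
  fold A in H, H0.
  pose proof (Rpower_pos A (K - 1 - 1)).
  pose proof (Rpower_pos A (K - 1)).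
  pose proof (Rpower_pos u (p - 1)).
  pose proof (Rpower_pos u (p - 1 - 1)).
  pose proof (Rpower_pos u (- (3/2))).
  assert (E1 : Rpower u (p * (K - 1 - 1)) * (Rpower u (p - 1) * Rpower u (p - 1)) = Rpower u (- (3/2))).
  { rewrite !Rpower_mul_same. f_equal. nra. }
  assert (E2 : Rpower u (p * (K - 1)) * Rpower u (p - 1 - 1) = Rpower u (- (3/2))).
  { rewrite !Rpower_mul_same. f_equal. nra. }
  set (X := Rpower A (K - 1 - 1) * (Rpower u (p - 1) * Rpower u (p - 1))).
  set (Y := Rpower A (K - 1) * Rpower u (p - 1 - 1)).
  assert (HX : 0 <= X <= Rpower u (- (3/2))).
  { unfold X; split; [nra|]. rewrite <- E1. apply Rmult_le_compat_r; nra. }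
  assert (HY : 0 <= Y <= Rpower u (- (3/2))).
  { unfold Y; split; [nra|]. rewrite <- E2. apply Rmult_le_compat_r; nra. }
  replace (K * ((K - 1) * Rpower A (K - 1 - 1) * (p * Rpower u (p - 1))) * (p * Rpower u (p - 1)) +
     K * Rpower A (K - 1) * (p * ((p - 1) * Rpower u (p - 1 - 1))))
   with ((K * (K - 1) * p * p) * X + (K * p * (p - 1)) * Y) by (unfold X, Y; ring).
  eapply Rle_trans; [apply abs_add_le|].
  rewrite (Rabs_mult (K * (K - 1) * p * p) X), (Rabs_mult (K * p * (p - 1)) Y).
  assert (Rabs (K * (K - 1) * p * p) <= 1).
  { rewrite Rabs_left1 by nra. nra. }
  assert (Rabs (K * p * (p - 1)) <= 1).
  { rewrite Rabs_left1 by nra. nra. }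
  rewrite (Rabs_right X), (Rabs_right Y) by lra.
  pose proof (Rabs_pos (K * (K - 1) * p * p)). pose proof (Rabs_pos (K * p * (p - 1))).
  nra.
Qed.

Definition F12 p K x y :=
  K * ((K - 1) * Rpower (Rpower y p + Rpower x p) (K - 1 - 1) * (p * Rpower y (p - 1))) * (p * Rpower x (p - 1)).

Lemma d_F1 p K x y : 0 < x ->
  derivable_pt_lim (fun x => Rpower (Rpower x p + Rpower y p) K) x (g1 p K (Rpower y p) x).
Proof. intros; apply d_g0; auto; left; apply Rpower_pos. Qed.

Lemma d_F12 p K x y : 0 < y ->
  derivable_pt_lim (fun y => g1 p K (Rpower y p) x) y (F12 p K x y).
Proof.
  intros Hy. unfold g1, F12.
  apply (derivable_pt_lim_ext (fun y => (K * Rpower (Rpower y p + Rpower x p) (K - 1)) * (p * Rpower x (p - 1)))).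
  { intros; rewrite (Rplus_comm (Rpower x p)); ring. }
  apply derivable_pt_lim_scal_right.
  apply (derivable_pt_lim_ext (mult_real_fct K (fun y => Rpower (Rpower y p + Rpower x p) (K - 1)))).
  { intros; reflexivity. }
  apply derivable_pt_lim_scal. apply d_pow_sum; auto. left; apply Rpower_pos.
Qed.

Lemma core_mix p K u v a b : 0 < p <= 1 -> 0 < K <= 1 -> p * K = 1/2 ->
  0 < b <= u -> 0 < a <= v ->
  Rpower (Rpower u p + Rpower v p) (K - 1 - 1) * Rpower u (p - 1) * Rpower v (p - 1)
    <= Rpower b (- (1/2) - p) * Rpower a (p - 1).
Proof.
  intros Hp HK E Hb Ha.
  pose proof (sum_bound p (K - 1 - 1) (Rpower v p) u ltac:(lra) ltac:(lra) ltac:(left; apply Rpower_pos)).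
  pose proof (Rpower_pos (Rpower u p + Rpower v p) (K - 1 - 1)).
  pose proof (Rpower_pos u (p - 1)). pose proof (Rpower_pos v (p - 1)).
  pose proof (Rpower_le_neg a v (p - 1) ltac:(lra) Ha).
  assert (Rpower u (p * (K - 1 - 1)) * Rpower u (p - 1) <= Rpower b (- (1/2) - p)).
  { rewrite Rpower_mul_same. replace (p * (K - 1 - 1) + (p - 1)) with (- (1/2) - p) by nra.
    apply Rpower_le_neg; lra. }
  pose proof (Rpower_pos b (- (1/2) - p)).
  assert (Rpower (Rpower u p + Rpower v p) (K - 1 - 1) * Rpower u (p - 1) <= Rpower b (- (1/2) - p)).
  { eapply Rle_trans; [|apply H4]. apply Rmult_le_compat_r; lra. }
  apply Rmult_le_compat; nra.
Qed.

Lemma BF12 p K x y a b : 0 < p <= 1 -> 0 < K <= 1 -> p * K = 1/2 ->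
  0 < a <= x -> a <= y -> 0 < b <= Rmax x y ->
  Rabs (F12 p K x y) <= K * (1 - K) * p ^ 2 * (Rpower b (- (1/2) - p) * Rpower a (p - 1)).
Proof.
  intros Hp HK E Ha Hay Hb. unfold F12.
  replace (K * ((K - 1) * Rpower (Rpower y p + Rpower x p) (K - 1 - 1) * (p * Rpower y (p - 1))) *
   (p * Rpower x (p - 1))) with
   (- (K * (1 - K) * p ^ 2) * (Rpower (Rpower y p + Rpower x p) (K - 1 - 1) * Rpower y (p - 1) * Rpower x (p - 1))) by ring.
  rewrite Rabs_mult, Rabs_Ropp, Rabs_right by nra.
  pose proof (Rpower_pos (Rpower y p + Rpower x p) (K - 1 - 1)).
  pose proof (Rpower_pos x (p - 1)). pose proof (Rpower_pos y (p - 1)).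
  rewrite Rabs_right by (apply Rle_ge; apply Rmult_le_pos; [apply Rmult_le_pos|]; lra).
  apply Rmult_le_compat_l; [nra|].
  unfold Rmax in Hb. destruct (Rle_dec x y).
  - apply core_mix; auto; lra.
  - rewrite (Rplus_comm (Rpower y p)).
    replace (Rpower (Rpower x p + Rpower y p) (K - 1 - 1) * Rpower y (p - 1) * Rpower x (p - 1)) with
      (Rpower (Rpower x p + Rpower y p) (K - 1 - 1) * Rpower x (p - 1) * Rpower y (p - 1)) by ring.
    apply core_mix; auto; lra.
Qed.

Lemma half_bound e y z : e <= 0 -> 0 < y -> y / 2 <= z ->
  Rpower z e <= Rpower 2 (- e) * Rpower y e.
Proof.
  intros He Hy Hz. eapply Rle_trans. apply (Rpower_le_neg (y / 2) z e); [auto| split; [lra|exact Hz]].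
  replace (y / 2) with (/ 2 * y) by field.
  rewrite <- Rpower_mult_distr by lra. apply Rmult_le_compat_r; [left; apply Rpower_pos|].
  unfold Rpower. rewrite ln_Rinv by lra. right; f_equal; ring.
Qed.

Lemma two_half : Rpower 2 (- - (1/2)) <= 2.
Proof.
  eapply Rle_trans; [apply (Rle_Rpower 2 _ 1); lra| rewrite Rpower_1; lra].
Qed.

Lemma two_3half : Rpower 2 (- - (3/2)) <= 4.
Proof.
  replace 4 with (Rpower 2 (1 + 1)).
  - apply Rle_Rpower; lra.
  - rewrite Rpower_plus, Rpower_1 by lra. ring.
Qed.

Lemma d_sqrt z : 0 < z -> derivable_pt_lim (fun z => Rpower z (1/2)) z (1/2 * Rpower z (1/2 - 1)).
Proof. intros; apply derivable_pt_lim_power; auto. Qed.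

Lemma d_sqrt1 z : 0 < z -> derivable_pt_lim (fun z => 1/2 * Rpower z (1/2 - 1)) z
   (1/2 * ((1/2 - 1) * Rpower z (1/2 - 1 - 1))).
Proof.
  intros. apply (derivable_pt_lim_ext (mult_real_fct (1/2) (fun z => Rpower z (1/2 - 1)))).
  { intros; reflexivity. }
  apply derivable_pt_lim_scal. apply derivable_pt_lim_power; auto.
Qed.

Lemma sqrt1diff y s : 0 < s -> 2 * s <= y ->
  Rabs (Rpower (y + s) (1/2) - Rpower (y - s) (1/2)) <= 2 * s * Rpower y (- (1/2)).
Proof.
  intros Hs Hy.
  replace (2 * s * Rpower y (- (1/2))) with (Rpower y (- (1/2)) * ((y + s) - (y - s))) by ring.
  apply (mvt_bound (fun z => Rpower z (1/2)) (fun z => 1/2 * Rpower z (1/2 - 1))); [lra| |].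
  - intros; apply d_sqrt; lra.
  - intros c Hc. pose proof (Rpower_pos c (1/2 - 1)).
    rewrite Rabs_right by lra.
    pose proof (half_bound (- (1/2)) y c ltac:(lra) ltac:(lra) ltac:(lra)).
    pose proof two_half. pose proof (Rpower_pos y (- (1/2))).
    replace (1/2 - 1) with (- (1/2)) by lra. nra.
Qed.

Lemma sqrt2diff y s : 0 < s -> 2 * s <= y ->
  Rabs (Rpower (y + s) (1/2) - 2 * Rpower y (1/2) + Rpower (y - s) (1/2)) <= 2 * s ^ 2 * Rpower y (- (3/2)).
Proof.
  intros Hs Hy.
  replace (2 * s ^ 2 * Rpower y (- (3/2))) with (2 * Rpower y (- (3/2)) * s ^ 2) by ring.
  apply (second_diff (fun z => Rpower z (1/2)) (fun z => 1/2 * Rpower z (1/2 - 1))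
     (fun z => 1/2 * ((1/2 - 1) * Rpower z (1/2 - 1 - 1)))); [lra| | |].
  - intros; apply d_sqrt; lra.
  - intros; apply d_sqrt1; lra.
  - intros c Hc. pose proof (Rpower_pos c (1/2 - 1 - 1)).
    rewrite Rabs_left1 by nra.
    pose proof (half_bound (- (3/2)) y c ltac:(lra) ltac:(lra) ltac:(lra)).
    pose proof two_3half. pose proof (Rpower_pos y (- (3/2))).
    replace (1/2 - 1 - 1) with (- (3/2)) by lra. nra.
Qed.

Lemma G1diff p K c a b : 0 < p <= 1 -> 0 < K <= 1 -> p * K = 1/2 -> 0 < a <= b -> 0 <= c ->
  Rabs (Rpower (Rpower b p + c) K - Rpower (Rpower a p + c) K) <= / 2 * Rpower a (- (1/2)) * (b - a).
Proof.
  intros Hp HK E Hab Hc.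
  apply (mvt_bound (fun u => Rpower (Rpower u p + c) K) (g1 p K c)); [lra| |].
  - intros; apply d_g0; auto; lra.
  - intros u Hu. eapply Rle_trans. apply Bg1; auto; lra.
    apply Rmult_le_compat_l; [lra|]. apply Rpower_le_neg; lra.
Qed.

Lemma G2diff p K c r s : 0 < p <= 1 -> 0 < K <= 1 -> p * K = 1/2 -> 0 < s -> 0 < r - s -> 0 <= c ->
  Rabs (Rpower (Rpower (r + s) p + c) K - 2 * Rpower (Rpower r p + c) K + Rpower (Rpower (r - s) p + c) K)
   <= 4 * s ^ 2 * Rpower (r - s) (- (3/2)).
Proof.
  intros Hp HK E Hs Hr Hc.
  replace (4 * s ^ 2 * Rpower (r - s) (- (3/2))) with (2 * (2 * Rpower (r - s) (- (3/2))) * s ^ 2) by ring.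
  apply (second_diff (fun u => Rpower (Rpower u p + c) K) (g1 p K c) (g2 p K c)); [lra| | |].
  - intros; apply d_g0; auto; lra.
  - intros; apply d_g1; auto; lra.
  - intros u Hu. eapply Rle_trans. apply Bg2; auto; lra.
    apply Rmult_le_compat_l; [lra|]. apply Rpower_le_neg; lra.
Qed.

Lemma Gf_eq p K x u : 0 < u -> Gf p K x u = Rpower (Rpower u p + rpow x p) K.
Proof.
  intros Hu. unfold Gf. rewrite (rpow_pos_eq u) by lra.
  pose proof (Rpower_pos u p). pose proof (rpow_nonneg x p).
  rewrite rpow_pos_eq by lra. f_equal; ring.
Qed.

Lemma Gf_eq2 p K x y : 0 < x -> 0 < y -> Gf p K x y = Rpower (Rpower x p + Rpower y p) K.
Proof.
  intros Hx Hy. unfold Gf. rewrite !(rpow_pos_eq x), (rpow_pos_eq y) by lra.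
  pose proof (Rpower_pos x p). pose proof (Rpower_pos y p).
  rewrite rpow_pos_eq by lra. reflexivity.
Qed.

Lemma Df_eq x y : 0 < Rabs (x - y) -> Df x y = Rpower (Rabs (x - y)) (1/2).
Proof. intros; unfold Df; apply rpow_pos_eq; auto. Qed.

Lemma cbound c a b : 0 < c <= 1 -> Rabs (c * (a - b)) <= Rabs a + Rabs b.
Proof.
  intros Hc. rewrite Rabs_mult, (Rabs_right c) by lra.
  pose proof (abs_sub_le a b). pose proof (Rabs_pos (a - b)). nra.
Qed.

Lemma abs_le_both x y : Rabs x <= y -> - y <= x <= y.
Proof. unfold Rabs; destruct Rcase_abs; lra. Qed.

Lemma abs_pos_case x : 0 <= x -> Rabs x = x.
Proof. intros; rewrite Rabs_right; lra. Qed.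
Lemma abs_neg_case x : x <= 0 -> Rabs x = - x.
Proof. intros; rewrite Rabs_left1; lra. Qed.

Lemma Dsecond t r s : 0 < s -> 2 * s <= Rabs (t - r) ->
  Rabs (Df t (r + s) - 2 * Df t r + Df t (r - s)) <= 2 * s ^ 2 * Rpower (Rabs (t - r)) (- (3/2)).
Proof.
  intros Hs Hy. unfold Df.
  destruct (Rle_dec 0 (t - r)).
  - rewrite (abs_pos_case (t - r)) in Hy |- * by lra.
    rewrite (abs_pos_case (t - (r + s))), (abs_pos_case (t - (r - s))) by lra.
    rewrite !rpow_pos_eq by lra.
    replace (t - (r + s)) with (t - r - s) by ring.
    replace (t - (r - s)) with (t - r + s) by ring.
    replace (Rpower (t - r - s) (1 / 2) - 2 * Rpower (t - r) (1 / 2) + Rpower (t - r + s) (1 / 2)) with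
      (Rpower (t - r + s) (1 / 2) - 2 * Rpower (t - r) (1 / 2) + Rpower (t - r - s) (1 / 2)) by ring.
    apply sqrt2diff; lra.
  - rewrite (abs_neg_case (t - r)) in Hy |- * by lra.
    rewrite (abs_neg_case (t - (r + s))), (abs_neg_case (t - (r - s))) by lra.
    rewrite !rpow_pos_eq by lra.
    replace (- (t - (r + s))) with (- (t - r) + s) by ring.
    replace (- (t - (r - s))) with (- (t - r) - s) by ring.
    apply sqrt2diff; lra.
Qed.

Lemma D1diff r t s : 0 < s -> 2 * s <= Rabs (t - r) ->
  Rabs (Df r (t + s) - Df r (t - s)) <= 2 * s * Rpower (Rabs (t - r)) (- (1/2)).
Proof.
  intros Hs Hy. unfold Df.
  destruct (Rle_dec 0 (t - r)).
  - rewrite (abs_pos_case (t - r)) in Hy |- * by lra.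
    rewrite (abs_neg_case (r - (t + s))), (abs_neg_case (r - (t - s))) by lra.
    rewrite !rpow_pos_eq by lra.
    replace (- (r - (t + s))) with (t - r + s) by ring.
    replace (- (r - (t - s))) with (t - r - s) by ring.
    apply sqrt1diff; lra.
  - rewrite (abs_neg_case (t - r)) in Hy |- * by lra.
    rewrite (abs_pos_case (r - (t + s))), (abs_pos_case (r - (t - s))) by lra.
    rewrite !rpow_pos_eq by lra.
    replace (r - (t + s)) with (- (t - r) - s) by ring.
    replace (r - (t - s)) with (- (t - r) + s) by ring.
    rewrite <- Rabs_Ropp.
    replace (- (Rpower (- (t - r) - s) (1 / 2) - Rpower (- (t - r) + s) (1 / 2))) with
      (Rpower (- (t - r) + s) (1 / 2) - Rpower (- (t - r) - s) (1 / 2)) by ring.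
    apply sqrt1diff; lra.
Qed.

Lemma Dmix t r s : 0 < s -> 2 * s <= Rabs (t - r) ->
  Rabs (Df t r - Df t (r - s) - Df (t - s) r + Df (t - s) (r - s)) <= 2 * s ^ 2 * Rpower (Rabs (t - r)) (- (3/2)).
Proof.
  intros Hs Hy. unfold Df.
  replace (t - s - (r - s)) with (t - r) by ring.
  destruct (Rle_dec 0 (t - r)).
  - rewrite (abs_pos_case (t - r)) in Hy |- * by lra.
    rewrite (abs_pos_case (t - (r - s))), (abs_pos_case (t - s - r)) by lra.
    rewrite !rpow_pos_eq by lra.
    replace (t - (r - s)) with (t - r + s) by ring.
    replace (t - s - r) with (t - r - s) by ring.
    rewrite <- Rabs_Ropp.
    replace (- (Rpower (t - r) (1 / 2) - Rpower (t - r + s) (1 / 2) - Rpower (t - r - s) (1 / 2) + Rpower (t - r) (1 / 2))) with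
      (Rpower (t - r + s) (1 / 2) - 2 * Rpower (t - r) (1 / 2) + Rpower (t - r - s) (1 / 2)) by ring.
    apply sqrt2diff; lra.
  - rewrite (abs_neg_case (t - r)) in Hy |- * by lra.
    rewrite (abs_neg_case (t - (r - s))), (abs_neg_case (t - s - r)) by lra.
    rewrite !rpow_pos_eq by lra.
    replace (- (t - (r - s))) with (- (t - r) - s) by ring.
    replace (- (t - s - r)) with (- (t - r) + s) by ring.
    rewrite <- Rabs_Ropp.
    replace (- (Rpower (- (t - r)) (1 / 2) - Rpower (- (t - r) - s) (1 / 2) - Rpower (- (t - r) + s) (1 / 2) + Rpower (- (t - r)) (1 / 2))) with
      (Rpower (- (t - r) + s) (1 / 2) - 2 * Rpower (- (t - r)) (1 / 2) + Rpower (- (t - r) - s) (1 / 2)) by ring.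
    apply sqrt2diff; lra.
Qed.

Lemma cond_i_ok H K T : 0 < H <= 1/2 -> 0 < K <= 1 -> 2 * H * K = 1/2 -> cond_i T (bfbm_cov H K).
Proof.
  intros HH HK E. exists 4. intros s t Hs Hst HtT. unfold incr_cov.
  pose proof (Rlip H K t t (t - s) HH HK E ltac:(lra) ltac:(lra)).
  pose proof (Rlip H K (t - s) t (t - s) HH HK E ltac:(lra) ltac:(lra)).
  replace (t - (t - s)) with s in H0, H1 by ring.
  apply abs_le_both in H0. apply abs_le_both in H1. lra.
Qed.

Lemma cond_iii_ok H K T : 0 < H <= 1/2 -> 0 < K <= 1 -> 2 * H * K = 1/2 -> cond_iii T (bfbm_cov H K).
Proof.
  intros HH HK E. exists 4. intros t s r Ht HtT Hs Hsr HrT. split.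
  - intros _. unfold second_diff_cov.
    pose proof (Rlip H K t (r + s) r HH HK E ltac:(lra) ltac:(lra)).
    pose proof (Rlip H K t r (r - s) HH HK E ltac:(lra) ltac:(lra)).
    replace (r + s - r) with s in H0 by ring. replace (r - (r - s)) with s in H1 by ring.
    apply abs_le_both in H0. apply abs_le_both in H1.
    apply Rabs_le. lra.
  - intros [Hr Htr]. unfold second_diff_cov. rewrite !cov_eq by auto.
    pose proof (c_bounds K ltac:(lra)). set (c := Rpower 2 (- K)) in *.
    set (p := 2 * H) in *.
    replace (c * (Gf p K t (r + s) - Df t (r + s)) - 2 * (c * (Gf p K t r - Df t r)) +
      c * (Gf p K t (r - s) - Df t (r - s))) with
      (c * ((Gf p K t (r + s) - 2 * Gf p K t r + Gf p K t (r - s)) -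
            (Df t (r + s) - 2 * Df t r + Df t (r - s)))) by ring.
    eapply Rle_trans; [apply cbound; auto|].
    rewrite !Gf_eq by lra.
    pose proof (G2diff p K (rpow t p) r s ltac:(unfold p; lra) HK ltac:(unfold p in *; nra) Hs ltac:(lra) (rpow_nonneg t p)).
    pose proof (Dsecond t r s Hs Htr).
    rewrite (rpow_pos_eq (r - s)) by lra. rewrite (rpow_pos_eq (Rabs (t - r))) by lra.
    pose proof (Rpower_pos (r - s) (- (3/2))). pose proof (Rpower_pos (Rabs (t - r)) (- (3/2))).
    assert (0 <= s ^ 2) by nra. nra.
Qed.

Lemma cond_iv_ok H K T : 0 < H <= 1/2 -> 0 < K <= 1 -> 2 * H * K = 1/2 -> cond_iv T (bfbm_cov H K).
Proof.
  intros HH HK E. pose proof (c_bounds K ltac:(lra)).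
  set (p := 2 * H) in *. assert (Hp : 0 < p <= 1) by (unfold p; lra).
  assert (E' : p * K = 1/2) by exact E.
  exists 4, (1/2). split; [lra|]. split; [|split].
  - intros s t Hs Hst HtT. split.
    + intros _. unfold sym_diff_cov.
      pose proof (Rlip H K t (t + s) t HH HK E ltac:(lra) ltac:(lra)).
      pose proof (Rlip H K t t (t - s) HH HK E ltac:(lra) ltac:(lra)).
      replace (t + s - t) with s in H1 by ring. replace (t - (t - s)) with s in H2 by ring.
      apply abs_le_both in H1. apply abs_le_both in H2. apply Rabs_le. lra.
    + intros Ht. unfold sym_diff_cov. rewrite !cov_eq by auto. fold p.
      set (c := Rpower 2 (- K)) in *.
      replace (c * (Gf p K t (t + s) - Df t (t + s)) - c * (Gf p K t (t - s) - Df t (t - s))) with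
        (c * ((Gf p K t (t + s) - Gf p K t (t - s)) - (Df t (t + s) - Df t (t - s)))) by ring.
      eapply Rle_trans; [apply cbound; auto|].
      assert (Df t (t + s) - Df t (t - s) = 0).
      { unfold Df. replace (t - (t + s)) with (- s) by ring. replace (t - (t - s)) with s by ring.
        rewrite Rabs_Ropp. ring. }
      rewrite H1, Rabs_R0, Rplus_0_r.
      rewrite !Gf_eq by lra.
      pose proof (G1diff p K (rpow t p) (t - s) (t + s) Hp HK E' ltac:(lra) (rpow_nonneg t p)).
      rewrite (rpow_pos_eq (t - s)) by lra. pose proof (Rpower_pos (t - s) (- (1/2))).
      replace (t + s - (t - s)) with (2 * s) in H2 by ring. nra.
  - intros s r t Hs Hsr HrT Hst HtT. split.
    + intros _. unfold sym_diff_cov.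
      pose proof (Rlip H K r (t + s) t HH HK E ltac:(lra) ltac:(lra)).
      pose proof (Rlip H K r t (t - s) HH HK E ltac:(lra) ltac:(lra)).
      replace (t + s - t) with s in H1 by ring. replace (t - (t - s)) with s in H2 by ring.
      apply abs_le_both in H1. apply abs_le_both in H2. apply Rabs_le. lra.
    + intros [Ht Htr]. unfold sym_diff_cov. rewrite !cov_eq by auto. fold p.
      set (c := Rpower 2 (- K)) in *.
      replace (c * (Gf p K r (t + s) - Df r (t + s)) - c * (Gf p K r (t - s) - Df r (t - s))) with
        (c * ((Gf p K r (t + s) - Gf p K r (t - s)) - (Df r (t + s) - Df r (t - s)))) by ring.
      eapply Rle_trans; [apply cbound; auto|].
      pose proof (D1diff r t s Hs Htr).
      rewrite !Gf_eq by lra.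
      pose proof (G1diff p K (rpow r p) (t - s) (t + s) Hp HK E' ltac:(lra) (rpow_nonneg r p)).
      rewrite (rpow_pos_eq (t - s)), (rpow_pos_eq (Rabs (t - r))) by lra. pose proof (Rpower_pos (t - s) (- (1/2))).
      replace (t + s - (t - s)) with (2 * s) in H2 by ring.
      pose proof (Rpower_pos (Rabs (t - r)) (- (1/2))). nra.
  - intros s t Hs Ht HtT. unfold back_diff_cov. rewrite !cov_eq by auto. fold p.
    set (c := Rpower 2 (- K)) in *.
    replace (c * (Gf p K s t - Df s t) - c * (Gf p K s (t - s) - Df s (t - s))) with
      (c * ((Gf p K s t - Gf p K s (t - s)) - (Df s t - Df s (t - s)))) by ring.
    eapply Rle_trans; [apply cbound; auto|].
    rewrite !Gf_eq by lra.
    pose proof (G1diff p K (rpow s p) (t - s) t Hp HK E' ltac:(lra) (rpow_nonneg s p)).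
    assert (HD : Rabs (Df s t - Df s (t - s)) <= / 2 * Rpower (t - 2 * s) (- (1/2)) * s).
    { unfold Df. rewrite (abs_neg_case (s - t)), (abs_neg_case (s - (t - s))) by lra.
      rewrite !rpow_pos_eq by lra.
      replace (- (s - t)) with (t - s) by ring. replace (- (s - (t - s))) with (t - 2 * s) by ring.
      replace (/ 2 * Rpower (t - 2 * s) (- (1/2)) * s) with
        (/ 2 * Rpower (t - 2 * s) (- (1/2)) * ((t - s) - (t - 2 * s))) by ring.
      apply (mvt_bound (fun z => Rpower z (1/2)) (fun z => 1/2 * Rpower z (1/2 - 1))); [lra| |].
      - intros; apply d_sqrt; lra.
      - intros z Hz. pose proof (Rpower_pos z (1/2 - 1)). rewrite Rabs_right by lra.
        replace (1/2 - 1) with (- (1/2)) by lra.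
        pose proof (Rpower_le_neg (t - 2 * s) z (- (1/2)) ltac:(lra) ltac:(lra)). lra. }
    pose proof (Rpower_le_neg (t - 2 * s) (t - s) (- (1/2)) ltac:(lra) ltac:(lra)).
    replace (1/2 + 1/2) with 1 by lra.
    rewrite (rpow_pos_eq s 1), (rpow_pos_eq (t - 2 * s)) by lra. rewrite Rpower_1 by lra.
    pose proof (Rpower_pos (t - s) (- (1/2))). pose proof (Rpower_pos (t - 2 * s) (- (1/2))).
    replace (t - (t - s)) with s in H1 by ring. nra.
Qed.

Lemma ii_bound H K s t r : 0 < H <= 1/2 -> 0 < K <= 1 -> 2 * H * K = 1/2 ->
  0 < s -> 2 * s <= r -> 2 * s <= t -> 2 * s <= Rabs (t - r) ->
  Rabs (incr_cov (bfbm_cov H K) s t r) <=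
   K * (1 - K) * (2 * H) ^ 2 * (Rpower (Rabs (t - r)) (- (1/2) - 2 * H) * Rpower (Rmin t r - s) (2 * H - 1)) * s ^ 2
   + 2 * s ^ 2 * Rpower (Rabs (t - r)) (- (3/2)).
Proof.
  intros HH HK E Hs Hr Ht Htr. pose proof (c_bounds K ltac:(lra)).
  unfold incr_cov. rewrite !cov_eq by auto.
  set (p := 2 * H) in *. assert (Hp : 0 < p <= 1) by (unfold p; lra).
  set (c := Rpower 2 (- K)) in *.
  replace (c * (Gf p K t r - Df t r) - c * (Gf p K t (r - s) - Df t (r - s)) -
     c * (Gf p K (t - s) r - Df (t - s) r) + c * (Gf p K (t - s) (r - s) - Df (t - s) (r - s))) with
    (c * ((Gf p K t r - Gf p K t (r - s) - Gf p K (t - s) r + Gf p K (t - s) (r - s)) -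
          (Df t r - Df t (r - s) - Df (t - s) r + Df (t - s) (r - s)))) by ring.
  eapply Rle_trans; [apply cbound; auto|].
  apply Rplus_le_compat; [|apply Dmix; auto].
  rewrite !Gf_eq2 by lra.
  apply (mixed_diff (fun x y => Rpower (Rpower x p + Rpower y p) K) (fun x y => g1 p K (Rpower y p) x)
     (F12 p K)); [lra| | |].
  - intros x y Hx Hy. apply d_F1; lra.
  - intros x y Hx Hy. apply d_F12; lra.
  - intros x y Hx Hy. apply BF12; auto.
    all: unfold Rmin, Rmax, Rabs in *; repeat destruct Rle_dec; repeat destruct Rcase_abs; lra.
Qed.

Lemma cond_ii_ok H K T : 0 < H <= 1/2 -> 0 < K <= 1 -> 2 * H * K = 1/2 -> cond_ii T (bfbm_cov H K).
Proof.
  intros HH HK E.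
  destruct (Req_dec K 1) as [K1|K1].
  - exists 2, (3/2). split; [lra|]. split; [lra|]. intros beta s t r Hs Hr HrT Ht HtT Htr.
    eapply Rle_trans; [apply ii_bound; auto|].
    rewrite K1. replace (1 * (1 - 1)) with 0 by ring.
    rewrite (rpow_pos_eq (Rabs (t - r))) by lra.
    pose proof (rpow_nonneg (Rabs (t - r)) (- (3/2))). pose proof (rpow_nonneg (Rmin t r - s) (- beta)).
    assert (0 <= s ^ 2) by nra.
    pose proof (Rpower_pos (Rabs (t - r)) (- (3/2))).
    assert (0 <= 2 * s ^ 2 * Rpower (Rabs (t - r)) (- (3/2)) * rpow (Rmin t r - s) (- beta)).
    { apply Rmult_le_pos; [nra|lra]. }
    rewrite (rpow_pos_eq (Rabs (t - r))) in H0 by lra. nra.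
  - assert (Hp : 1/2 < 2 * H) by nra.
    exists 2, (1/2 + 2 * H). split; [lra|]. split; [lra|]. intros beta s t r Hs Hr HrT Ht HtT Htr.
    eapply Rle_trans; [apply ii_bound; auto|].
    assert (Hm : 0 < Rmin t r - s) by (unfold Rmin; destruct (Rle_dec t r); lra).
    rewrite !(rpow_pos_eq (Rabs (t - r))) by lra. rewrite (rpow_pos_eq (Rmin t r - s)) by lra.
    unfold beta. replace (- (3/2 - (1/2 + 2 * H))) with (2 * H - 1) by lra.
    replace (- (1/2 + 2 * H)) with (- (1/2) - 2 * H) by lra.
    pose proof (Rpower_pos (Rabs (t - r)) (- (1/2) - 2 * H)).
    pose proof (Rpower_pos (Rmin t r - s) (2 * H - 1)).
    set (X := Rpower (Rabs (t - r)) (- (1/2) - 2 * H) * Rpower (Rmin t r - s) (2 * H - 1)).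
    assert (0 < X) by (unfold X; nra).
    assert (K * (1 - K) * (2 * H) ^ 2 <= 2) by nra.
    assert (0 <= s ^ 2) by nra.
    replace (2 * s ^ 2 * Rpower (Rabs (t - r)) (- (1/2) - 2 * H) * Rpower (Rmin t r - s) (2 * H - 1))
      with (2 * X * s ^ 2) by (unfold X; ring).
    apply Rplus_le_compat_r. apply Rmult_le_compat_r; [lra|]. apply Rmult_le_compat_r; lra.
Qed.

Theorem proposition5p1 (H K : R) :
  0 < H -> H <= 1/2 -> 0 < K -> K <= 1 -> 2 * H * K = 1/2 ->
  forall T : R, 0 < T ->
    cond_i T (bfbm_cov H K) /\ cond_ii T (bfbm_cov H K) /\
    cond_iii T (bfbm_cov H K) /\ cond_iv T (bfbm_cov H K).
Proof.
  intros H0 H1 K0 K1 E T HT.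
  repeat split.
  - apply cond_i_ok; auto; lra.
  - apply cond_ii_ok; auto; lra.
  - apply cond_iii_ok; auto; lra.
  - apply cond_iv_ok; auto; lra.
Qed.
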